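(* Let $P, P' \subset \mathbb{R}^n$ be centrally symmetric convex polyhedra, with centers of symmetry $c(P)$ and $c(P')$. For $v \in \mathbb{R}^n$ let $T_v$ denote translation by $v$, and consider the offset parameter $$f(v) = \min\{ r \geq 0 : T_v(P) \subset N(P';r)\}.$$ Then $f(v)$ is minimal (over all $v \in \mathbb{R}^n$) when $T_v$ moves the center $c(P)$ to the center $c(P')$, i.e. for $v = c(P') - c(P)$.
   Context: For a subset $C \subset \mathbb{R}^n$ and $r \geq 0$, the $r$-offset of $C$ is $N(C;r) = \{ p \in \mathbb{R}^n : d(p,q) \leq r \text{ for some } q \in C\}$, where $d$ is the Euclidean distance. A polyhedron here means a bounded convex polyhedron (convex polytope). It is centrally symmetric if there is a point $c(P)$ (its center) such that the point reflection through $c(P)$ maps $P$ onto itself. *)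

(* Defs.v *)
From HB Require Import structures.
From mathcomp Require Import all_boot all_order all_algebra.
From mathcomp Require Import all_classical all_reals.
Set Implicit Arguments. Unset Strict Implicit. Unset Printing Implicit Defensive.
Import Order.TTheory GRing.Theory Num.Theory.
Local Open Scope ring_scope.
Local Open Scope classical_set_scope.

Section Defs.
Variables (R : realType) (n : nat).
Notation pt := 'rV[R]_n.

Definition edist (p q : pt) : R := Num.sqrt (\sum_(i < n) (p 0 i - q 0 i) ^+ 2).

Definition halfspace (a : pt) (b : R) : set pt :=
  [set x | \sum_(i < n) a 0 i * x 0 i <= b].

Definition polyhedron (P : set pt) : Prop :=
  exists s : seq (pt * R), P = [set x | forall h, h \in s -> halfspace h.1 h.2 x].

Definition bounded_set (P : set pt) : Prop :=
  exists M : R, forall x, P x -> edist x 0 <= M.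

Definition polytope (P : set pt) : Prop := polyhedron P /\ bounded_set P.

Definition symmetric_about (P : set pt) (c : pt) : Prop :=
  [set c *+ 2 - x | x in P] = P.

Definition offset (C : set pt) (r : R) : set pt :=
  [set p | exists2 q, C q & edist p q <= r].

Definition translate (v : pt) (P : set pt) : set pt := [set x + v | x in P].

Definition offset_param (P P' : set pt) (v : pt) : R :=
  inf [set r : R | 0 <= r /\ translate v P `<=` offset P' r].

End Defs.

(* Main.v *)
Require Import Defs.
From HB Require Import structures.
From mathcomp Require Import all_boot all_order all_algebra.
From mathcomp Require Import all_classical all_reals.
From mathcomp Require Import ring lra.
Import Order.TTheory GRing.Theory Num.Theory.
Local Open Scope ring_scope.
Local Open Scope classical_set_scope.

Section Aux.
Variables (R : realType) (n : nat).

Lemma sqrt_le_aux (X r : R) : 0 <= r -> (Num.sqrt X <= r) = (X <= r ^+ 2).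
Proof. by move=> r0; rewrite -{1}(ger0_norm r0) -sqrtr_sqr ler_sqrt // sqr_ge0. Qed.

Lemma mid_aux (a b : 'I_n -> R) (r : R) :
  Num.sqrt (\sum_i a i ^+ 2) <= r -> Num.sqrt (\sum_i b i ^+ 2) <= r ->
  Num.sqrt (\sum_i ((a i + b i) / 2) ^+ 2) <= r.
Proof.
move=> ha hb; have r0 : 0 <= r by exact: le_trans (sqrtr_ge0 _) ha.
move: ha hb; rewrite !sqrt_le_aux // => ha hb.
apply: (@le_trans _ _ (\sum_i (a i ^+ 2 + b i ^+ 2) / 2)).
  apply: ler_sum => i _; have := sqr_ge0 (a i - b i); nra.
rewrite -mulr_suml big_split /=; lra.
Qed.

Lemma three_aux (a b c : 'I_n -> R) :
  \sum_i (a i + b i + c i) ^+ 2 <=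
  3 * (\sum_i a i ^+ 2 + \sum_i b i ^+ 2 + \sum_i c i ^+ 2).
Proof.
rewrite -!big_split /= mulr_sumr; apply: ler_sum => i _.
have := sqr_ge0 (a i - b i); have := sqr_ge0 (b i - c i);
  have := sqr_ge0 (a i - c i); nra.
Qed.
End Aux.

Theorem lemma1 (R : realType) (n : nat) (P P' : set 'rV[R]_n) (c c' : 'rV[R]_n) :
  P !=set0 -> P' !=set0 ->
  polytope P -> polytope P' ->
  symmetric_about P c -> symmetric_about P' c' ->
  forall v : 'rV[R]_n, offset_param P P' (c' - c) <= offset_param P P' v.
Proof.
move=> [p0 Pp0] [q0 P'q0] [_ [M HM]] [[s' eqP'] _] symP symP' v.
have M0 : 0 <= M by exact: le_trans (sqrtr_ge0 _) (HM _ Pp0).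
set w := c' - c.
have sub : [set r | 0 <= r /\ translate v P `<=` offset P' r] `<=`
           [set r | 0 <= r /\ translate w P `<=` offset P' r].
  move=> r [r0 H]; split => // _ [x Px <-].
  have [q1 P'q1 d1] := H (x + v) (ex_intro2 _ _ x Px erefl).
  have Py : P (c *+ 2 - x) by rewrite -symP; exists x.
  have [q2 P'q2 d2] := H (c *+ 2 - x + v) (ex_intro2 _ _ _ Py erefl).
  have P'q3 : P' (c' *+ 2 - q2) by rewrite -symP'; exists q2.
  exists (2^-1 *: (q1 + (c' *+ 2 - q2))).
    move: P'q3; move: (c' *+ 2 - q2) => q3 P'q3.
    move: P'q1 P'q3; rewrite eqP' /= => H1 H3 h hs.
    have := H1 h hs; have := H3 h hs; rewrite /halfspace /=.
    have -> : \sum_(i < n) h.1 0 i * (2^-1 *: (q1 + q3)) 0 i =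
      2^-1 * (\sum_(i < n) h.1 0 i * q1 0 i + \sum_(i < n) h.1 0 i * q3 0 i).
      by rewrite -big_split big_distrr; apply: eq_bigr => i _; rewrite !mxE /=; ring.
    lra.
  have d2' : Num.sqrt (\sum_i (- ((c *+ 2 - x + v) 0 i - q2 0 i)) ^+ 2) <= r.
    by under eq_bigr => i _ do rewrite sqrrN; exact: d2.
  have hm := @mid_aux R n (fun i => (x + v) 0 i - q1 0 i)
     (fun i => - ((c *+ 2 - x + v) 0 i - q2 0 i)) r d1 d2'.
  rewrite /edist; apply: le_trans hm.
  rewrite le_eqVlt; apply/orP; left; apply/eqP; congr Num.sqrt.
  apply: eq_bigr => i _; by rewrite !mxE; congr (_ ^+ 2); field.
have ne : [set r | 0 <= r /\ translate v P `<=` offset P' r] !=set0.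
  set K := 3 * (M ^+ 2 + \sum_(i < n) v 0 i ^+ 2 + \sum_(i < n) q0 0 i ^+ 2).
  have K0 : 0 <= K.
    have s1 : 0 <= \sum_(j < n) v 0 j ^+ 2 by apply: sumr_ge0 => j _; exact: sqr_ge0.
    have s2 : 0 <= \sum_(j < n) q0 0 j ^+ 2 by apply: sumr_ge0 => j _; exact: sqr_ge0.
    have := sqr_ge0 M; rewrite /K; lra.
  exists (Num.sqrt K); split; first exact: sqrtr_ge0.
  move=> _ [y Py <-]; exists q0 => //.
  rewrite /edist ler_sqrt //.
  have hx := HM _ Py; rewrite /edist sqrt_le_aux // in hx.
  have h3 := @three_aux R n (fun i => y 0 i) (fun i => v 0 i) (fun i => - q0 0 i).
  rewrite (_ : \sum_(i < n) ((y + v) 0 i - q0 0 i) ^+ 2 =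
     \sum_(i < n) (y 0 i + v 0 i + - q0 0 i) ^+ 2); last first.
    by apply: eq_bigr => i _; rewrite !mxE.
  apply: le_trans h3 _.
  rewrite /K ler_pM2l //.
  have hq : \sum_(i < n) (- q0 0 i) ^+ 2 = \sum_(i < n) q0 0 i ^+ 2.
    by apply: eq_bigr => i _; rewrite sqrrN.
  have hy : \sum_(i < n) y 0 i ^+ 2 <= M ^+ 2.
    apply: le_trans hx; rewrite le_eqVlt; apply/orP; left; apply/eqP.
    by apply: eq_bigr => i _; rewrite !mxE subr0.
  lra.
rewrite /offset_param; apply: lb_le_inf => // r Svr.
apply: ge_inf; last exact: sub.
by exists 0 => y [].
Qed.
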